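(* Let $\phi,\varphi\in\mathrm{Stab}_N(\mathbf{Q}_2)$, $x\in\mathbf{Q}_2$ and $v,w\in V$. Then: (1) if $vx=wx$, then $\log_2((\varphi^{-1}v\varphi)'(\varphi^{-1}x))-\log_2(v'(x))=\log_2((\varphi^{-1}w\varphi)'(\varphi^{-1}x))-\log_2(w'(x))$; (2) for $y\in\mathbf{Q}_2$ and $u\in V$ with $u0=y$, the quantity $\gamma_\varphi(y):=\log_2((\varphi^{-1}u\varphi)'(\varphi^{-1}0))-\log_2(u'(0))$ does not depend on the choice of $u$, hence defines a map $\gamma_\varphi:\mathbf{Q}_2\to\mathbf Z$; (3) $\gamma_\varphi(vx)-\gamma_\varphi(x)=\log_2((\varphi^{-1}v\varphi)'(\varphi^{-1}x))-\log_2(v'(x))$; (4) $\gamma_{\phi\varphi}=\gamma_\phi+\gamma_\varphi^\phi-\gamma_\varphi(\phi^{-1}(0))$, where $\gamma_\varphi^\phi(y)=\gamma_\varphi(\phi^{-1}y)$.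
   Context: Cantor space $\mathfrak C=\{0,1\}^{\mathbf N}$; $C_m=\{m\cdot x\}$. Thompson's group $V$: homeomorphisms $v$ with $v(m_kx)=m'_kx$ for partitions $\mathfrak C=\bigsqcup C_{m_k}=\bigsqcup C_{m'_k}$; slope $v'(x)=2^{|m_k|-|m'_k|}$ on $C_{m_k}$. $\mathbf{Q}_2\subset\mathfrak C$: eventually-zero sequences; $0$ denotes the zero sequence; $V$ acts transitively on $\mathbf{Q}_2$. $\mathrm{Stab}_N(\mathbf{Q}_2)=\{\varphi\in\mathrm{Homeo}(\mathfrak C):\varphi V\varphi^{-1}=V,\ \varphi(\mathbf{Q}_2)=\mathbf{Q}_2\}$. *)

(* Defs.v *)
From mathcomp Require Import all_boot all_algebra.
From Stdlib Require Import ClassicalEpsilon.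
Set Implicit Arguments. Unset Strict Implicit. Unset Printing Implicit Defensive.
Import GRing.Theory Num.Theory.

Definition C := nat -> bool.
Definition word := seq bool.

Definition zero : C := fun _ => false.

Definition Q2 (x : C) : Prop := exists N, forall n, (N <= n)%N -> x n = false.

Definition wcat (m : word) (x : C) : C :=
  fun n => if (n < size m)%N then nth false m n else x (n - size m)%N.

Definition prefixb (m : word) (x : C) : bool :=
  all (fun i => x i == nth false m i) (iota 0 (size m)).

Definition is_cyl_partition (ms : seq word) : Prop :=
  forall x : C, count (fun m => prefixb m x) ms = 1%N.

(* p = [(m_1,m'_1); ...] witnesses v(m_k x) = m'_k x for partitions
   C = |_| C_{m_k} = |_| C_{m'_k} *)
Definition V_data (v : C -> C) (p : seq (word * word)) : Prop :=
  [/\ is_cyl_partition (map fst p), is_cyl_partition (map snd p) &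
      forall q, q \in p -> forall y, v (wcat q.1 y) = wcat q.2 y].

Definition inV (v : C -> C) : Prop := exists p, V_data v p.

(* logslope v x = log_2 (v'(x)) = |m_k| - |m'_k| for the k with x in C_{m_k},
   computed from a chosen defining pair of partitions (0 if v is not in V). *)
Definition logslope (v : C -> C) (x : C) : int :=
  match excluded_middle_informative (inV v) with
  | left H =>
      let p := proj1_sig (constructive_indefinite_description _ H) in
      let q := nth ([::], [::]) p (find (fun q => prefixb q.1 x) p) in
      (size q.1)%:Z - (size q.2)%:Z
  | right _ => 0
  end.

Definition ccontinuous (f : C -> C) : Prop :=
  forall (x : C) (n : nat), exists N : nat, forall y : C,
    (forall i, (i < N)%N -> x i = y i) -> forall i, (i < n)%N -> f x i = f y i.

Record homeo := Homeo {
  hfun : C -> C;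
  hinv : C -> C;
  hK : cancel hfun hinv;
  hKinv : cancel hinv hfun;
  hcont : ccontinuous hfun;
  hinvcont : ccontinuous hinv }.

Lemma ccontinuous_comp (f g : C -> C) :
  ccontinuous f -> ccontinuous g -> ccontinuous (fun x => f (g x)).
Proof.
move=> cf cg x n; have [N HN] := cf (g x) n; have [M HM] := cg x N.
by exists M => y hy i hi; apply: HN => // j hj; apply: HM.
Qed.

Definition hcomp (phi psi : homeo) : homeo :=
  @Homeo (fun x => hfun phi (hfun psi x)) (fun x => hinv psi (hinv phi x))
    (can_comp (hK phi) (hK psi)) (can_comp (hKinv psi) (hKinv phi))
    (ccontinuous_comp (hcont phi) (hcont psi))
    (ccontinuous_comp (hinvcont psi) (hinvcont phi)).

Definition StabN (phi : homeo) : Prop :=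
  (forall w : C -> C, inV w <->
     exists v, inV v /\ forall x, w x = hfun phi (v (hinv phi x))) /\
  (forall y : C, Q2 y <-> exists x, Q2 x /\ hfun phi x = y).

Definition conjh (phi : homeo) (v : C -> C) : C -> C :=
  fun x => hinv phi (v (hfun phi x)).

Definition Delta (phi : homeo) (v : C -> C) (x : C) : int :=
  logslope (conjh phi v) (hinv phi x) - logslope v x.

Definition gamma (phi : homeo) (y : C) : int :=
  match excluded_middle_informative (exists u, inV u /\ u zero = y) with
  | left H => Delta phi (proj1_sig (constructive_indefinite_description _ H)) zero
  | right _ => 0
  end.

(* Main.v *)
Require Import Defs.
From mathcomp Require Import all_boot all_algebra.
Import GRing.Theory Num.Theory.
From mathcomp Require Import zify.
From Stdlib Require Import FunctionalExtensionality Classical ClassicalEpsilon.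
Set Implicit Arguments. Unset Strict Implicit. Unset Printing Implicit Defensive.


Definition sh (n : nat) (z : C) : C := fun i => z (i + n)%N.
Definition agree (n : nat) (a b : C) := forall i, (i < n)%N -> a i = b i.

Lemma wcat_cat a b y : wcat (a ++ b) y = wcat a (wcat b y).
Proof.
apply: functional_extensionality => i; rewrite /wcat size_cat nth_cat.
case: (ltnP i (size a)) => h1.
  by have -> : (i < size a + size b)%N by lia.
case: (ltnP i (size a + size b)) => h2.
  by have -> : (i - size a < size b)%N by lia.
have -> : (i - size a < size b)%N = false by lia.
by rewrite subnDA.
Qed.

Lemma sh_wcat a y : sh (size a) (wcat a y) = y.
Proof.
apply: functional_extensionality => i; rewrite /sh /wcat.
have -> : (i + size a < size a)%N = false by lia.
by rewrite addnK.
Qed.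

Lemma prefixbP a x : reflect (forall i, (i < size a)%N -> x i = nth false a i) (prefixb a x).
Proof.
apply: (iffP allP) => h.
  by move=> i hi; apply/eqP; apply: h; rewrite mem_iota.
by move=> i; rewrite mem_iota => /andP[_ hi]; apply/eqP; apply: h.
Qed.

Lemma pfx_wcat a y : prefixb a (wcat a y).
Proof. by apply/prefixbP => i hi; rewrite /wcat hi. Qed.

Lemma pfx_decomp a x : prefixb a x -> x = wcat a (sh (size a) x).
Proof.
move/prefixbP=> h; apply: functional_extensionality => i; rewrite /wcat /sh.
case: ltnP => hi; first by rewrite h.
by rewrite subnK.
Qed.

Lemma pfx_agree a x z : prefixb a x -> agree (size a) z x -> prefixb a z.
Proof. by move=> /prefixbP h ag; apply/prefixbP => i hi; rewrite ag // h. Qed.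

Lemma pfx_agree2 a x : prefixb a x -> agree (size a) x (wcat a x).
Proof. by move=> /prefixbP h i hi; rewrite h // /wcat hi. Qed.

Lemma pfx_catl a s y : prefixb s y -> prefixb (a ++ s) (wcat a y).
Proof. by move=> /pfx_decomp ->; rewrite -wcat_cat pfx_wcat. Qed.

Lemma pfx_catr b s y : prefixb (b ++ s) (wcat b y) -> prefixb s y.
Proof.
move=> /pfx_decomp h.
have := congr1 (sh (size b)) h; rewrite wcat_cat !sh_wcat => ->.
exact: pfx_wcat.
Qed.

Lemma pfx_comp a c x : prefixb a x -> prefixb c x -> (size a <= size c)%N ->
  c = a ++ drop (size a) c.
Proof.
move=> /prefixbP ha /prefixbP hc hs; apply: (@eq_from_nth _ false).
  by rewrite size_cat size_drop; lia.
move=> i hi; rewrite nth_cat nth_drop; case: ltnP => h.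
  by rewrite -ha // hc //; lia.
by rewrite subnKC.
Qed.

Lemma wcat_size c d : (forall y, wcat c y = wcat d y) -> size c = size d.
Proof.
wlog h : c d / (size c < size d)%N.
  move=> H e; case: (ltngtP (size c) (size d)) => hc; first exact: H.
    by apply/esym/H => // y; rewrite e.
  by [].
move=> e; exfalso.
pose y : C := fun i => ~~ nth false d (i + size c).
have := congr1 (fun f => f (size c)) (e y).
rewrite /wcat ltnn h subnn /y add0n; by case: (nth false d (size c)).
Qed.


Definition lsl (f : C -> C) (x : C) (k : int) : Prop :=
  exists a b, [/\ prefixb a x, ((size a)%:Z - (size b)%:Z)%R = k &
                  forall y, f (wcat a y) = wcat b y].

Lemma lsl_ext f a b s y : (forall y, f (wcat a y) = wcat b y) ->
  f (wcat (a ++ s) y) = wcat (b ++ s) y.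
Proof. by move=> h; rewrite !wcat_cat h. Qed.

Lemma lsl_uniq_aux f x a1 b1 a2 b2 : prefixb a1 x -> prefixb a2 x ->
  (size a1 <= size a2)%N ->
  (forall y, f (wcat a1 y) = wcat b1 y) -> (forall y, f (wcat a2 y) = wcat b2 y) ->
  ((size a1)%:Z - (size b1)%:Z = (size a2)%:Z - (size b2)%:Z)%R.
Proof.
move=> p1 p2 hs h1 h2.
have e := pfx_comp p1 p2 hs.
have: size (b1 ++ drop (size a1) a2) = size b2.
  apply: wcat_size => y; rewrite -(lsl_ext _ _ h1) -e; exact: h2.
rewrite {2}e size_cat size_cat => <-.
lia.
Qed.

Lemma lsl_uniq f x k1 k2 : lsl f x k1 -> lsl f x k2 -> k1 = k2.
Proof.
move=> [a1 [b1 [p1 <- h1]]] [a2 [b2 [p2 <- h2]]].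
case: (leqP (size a1) (size a2)) => hs.
  exact: (lsl_uniq_aux p1 p2).
apply/esym; apply: (lsl_uniq_aux p2 p1) => //; exact: ltnW.
Qed.

Lemma pfx_f f a b x : prefixb a x -> (forall y, f (wcat a y) = wcat b y) ->
  f x = wcat b (sh (size a) x).
Proof. by move=> /pfx_decomp {1}-> ->. Qed.

Lemma lsl_comp f g x k1 k2 : lsl f x k1 -> lsl g (f x) k2 ->
  lsl (fun z => g (f z)) x (k1 + k2)%R.
Proof.
move=> [a [b [pa <- hf]]] [c [d [pc <- hg]]].
have efx := pfx_f pa hf.
have pb : prefixb b (f x) by rewrite efx pfx_wcat.
case: (leqP (size b) (size c)) => hs.
  have ec := pfx_comp pb pc hs.
  set s := drop (size b) c in ec.
  exists (a ++ s), d; split.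
  - rewrite (pfx_decomp pa); apply: pfx_catl; apply: (@pfx_catr b).
    by rewrite -ec -efx.
  - rewrite ec !size_cat; lia.
  by move=> y; rewrite (lsl_ext _ _ hf) -ec hg.
have ec := pfx_comp pc pb (ltnW hs).
set s := drop (size c) b in ec.
exists a, (d ++ s); split => //.
- rewrite ec !size_cat; lia.
by move=> y; rewrite hf ec (lsl_ext _ _ hg).
Qed.

Lemma mkseq_prefix (y : C) n : prefixb (mkseq y n) y.
Proof. by apply/prefixbP => i; rewrite size_mkseq => hi; rewrite nth_mkseq. Qed.

Lemma agree_wcat a x y : prefixb a x -> agree (size a) (wcat a y) x.
Proof. by move=> /prefixbP h i hi; rewrite /wcat hi h. Qed.

Lemma agree_le m n a b : (m <= n)%N -> agree n a b -> agree m a b.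
Proof. by move=> hmn h i hi; apply: h; apply: leq_trans hmn. Qed.

Lemma lsl_local f g x k : (exists M, forall z, agree M z x -> f z = g z) ->
  lsl f x k -> lsl g x k.
Proof.
move=> [M hM] [a [b [pa <- hf]]].
set s := mkseq (sh (size a) x) M.
have pas : prefixb (a ++ s) x.
  by rewrite {1}(pfx_decomp pa); apply: pfx_catl; apply: mkseq_prefix.
exists (a ++ s), (b ++ s); split => //.
  rewrite !size_cat; lia.
move=> y; rewrite -(lsl_ext _ _ hf); apply/esym/hM.
apply: (agree_le _ (agree_wcat y pas)).
by rewrite size_cat size_mkseq leq_addl.
Qed.

Lemma lsl_inv f g x k : (forall z, g (f z) = z) -> lsl f x k -> lsl g (f x) (- k)%R.
Proof.
move=> gf [a [b [pa <- hf]]]; exists b, a; split.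
- by rewrite (pfx_f pa hf) pfx_wcat.
- lia.
by move=> y; rewrite -hf gf.
Qed.

Lemma lsl_germ f g x k : lsl f x k -> lsl g x k -> f x = g x ->
  exists A, prefixb A x /\ forall y, f (wcat A y) = g (wcat A y).
Proof.
move=> [a [b [pa ea hf]]] [c [d [pc ec hg]]] efg.
suff main : forall f g a b c d, prefixb a x -> prefixb c x -> (size a <= size c)%N ->
   ((size a)%:Z - (size b)%:Z = (size c)%:Z - (size d)%:Z)%R ->
   (forall y, f (wcat a y) = wcat b y) -> (forall y, g (wcat c y) = wcat d y) ->
   f x = g x -> exists A, prefixb A x /\ forall y, f (wcat A y) = g (wcat A y).
  case: (leqP (size a) (size c)) => hs.
    by apply: (main _ _ a b c d) => //; rewrite ea ec.
  have [A [pA hA]] : exists A, prefixb A x /\ forall y, g (wcat A y) = f (wcat A y).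
    by apply: (main _ _ c d a b) => //; [exact: ltnW | rewrite ea ec].
  by exists A; split => // y; rewrite hA.
move=> {f g a b c d pa ea hf pc ec hg efg} f g a b c d pa pc hs e hf hg efg.
have eac := pfx_comp pa pc hs; set s := drop (size a) c in eac.
have hf' : forall y, f (wcat c y) = wcat (b ++ s) y.
  by move=> y; rewrite eac; exact: lsl_ext.
exists c; split => // y.
rewrite hf' hg.
have hsz : size (b ++ s) = size d.
  rewrite size_cat; move: e; rewrite {1}eac size_cat; lia.
have := efg; rewrite {1}(pfx_f pc hf') (pfx_f pc hg) => efg'.
suff -> : b ++ s = d by [].
apply: (@eq_from_nth _ false) => // i hi.
have := congr1 (fun z => z i) efg'; rewrite /wcat hi -hsz hi.
by [].
Qed.


Lemma logslope_lsl v x : inV v -> lsl v x (logslope v x).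
Proof.
move=> Hv; rewrite /logslope; case: excluded_middle_informative => // H.
set p := proj1_sig _.
have [h1 h2 h3] : V_data v p := proj2_sig (constructive_indefinite_description _ H).
have hh : has (fun q : word * word => prefixb q.1 x) p.
  by rewrite has_count; have := h1 x; rewrite count_map => ->.
set q := nth _ _ _.
have qin : q \in p by apply: mem_nth; rewrite -has_find.
exists q.1, q.2; split => //; last by move=> y; apply: h3.
exact: (nth_find ([::], [::]) hh).
Qed.

Lemma logslope_eq v x k : inV v -> lsl v x k -> logslope v x = k.
Proof. by move=> Hv h; apply: lsl_uniq (logslope_lsl x Hv) h. Qed.

Lemma lsl_iter g x s n : g x = x -> lsl g x s -> lsl (iter n g) x (n%:Z * s)%R.
Proof.
move=> gx hg; elim: n => [|n IH].
  exists [::], [::]; split => //; first by rewrite mul0r.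
have hx : iter n g x = x by elim: n {IH} => //= n ->.
have := lsl_comp IH (g := g) (k2 := s); rewrite hx => /(_ hg).
rewrite -addn1 PoszD mulrDl mul1r addn1; move=> h; exact h.
Qed.

Lemma stab_conjV phi v : StabN phi -> inV v -> inV (conjh phi v).
Proof.
move=> [hV _] Hv; have [v0 [Hv0 e]] := (proj1 (hV v) Hv).
suff -> : conjh phi v = v0 by [].
by apply: functional_extensionality => z; rewrite /conjh e !hK.
Qed.

Lemma stab_conjV' phi v : StabN phi -> inV v -> inV (fun z => hfun phi (v (hinv phi z))).
Proof. by move=> [hV _] Hv; apply/hV; exists v. Qed.

Lemma stab_Q2inv phi x : StabN phi -> Q2 x -> Q2 (hinv phi x).
Proof. by move=> [_ hQ] /hQ [z [hz <-]]; rewrite hK. Qed.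

Lemma stab_Q2 phi x : StabN phi -> Q2 x -> Q2 (hfun phi x).
Proof. by move=> [_ hQ] hx; apply/hQ; exists x. Qed.

Definition hrev (phi : homeo) : homeo :=
  @Homeo (hinv phi) (hfun phi) (hKinv phi) (hK phi) (hinvcont phi) (hcont phi).

Lemma stab_rev phi : StabN phi -> StabN (hrev phi).
Proof.
move=> hS; split => /=.
  move=> w; split.
    move=> Hw; exists (fun z => hfun phi (w (hinv phi z))); split.
      exact: stab_conjV'.
    by move=> z; rewrite !hK.
  move=> [v [Hv e]].
  suff -> : w = conjh phi v by apply: stab_conjV.
  exact: functional_extensionality.
move=> y; split.
  move=> hy; exists (hfun phi y); split; first exact: stab_Q2.
  by rewrite hK.
by move=> [x [hx <-]]; apply: stab_Q2inv.
Qed.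

Lemma conjh_iter phi g n z : conjh phi (iter n g) z = iter n (conjh phi g) z.
Proof.
rewrite /conjh; elim: n z => [|n IH] z /=; first by rewrite hK.
by rewrite -IH hKinv.
Qed.


Definition vfun (p : seq (word * word)) (z : C) : C :=
  let q := nth ([::], [::]) p (find (fun q : word * word => prefixb q.1 z) p) in
  wcat q.2 (sh (size q.1) z).

Lemma find_unique (T : eqType) (P : pred T) (s : seq T) (q x0 : T) :
  count P s = 1%N -> q \in s -> P q -> nth x0 s (find P s) = q.
Proof.
move=> hc hin hq; move: hin hc => /splitPr [s1 s2]; rewrite count_cat /= hq.
move=> h; have h0 : count P s1 = 0%N by lia.
have hn : ~~ has P s1 by rewrite has_count h0.
by rewrite find_cat (negbTE hn) /= hq addn0 nth_cat ltnn subnn.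
Qed.

Lemma part_count p z : is_cyl_partition (map fst p) ->
  count (fun q : word * word => prefixb q.1 z) p = 1%N.
Proof. by move=> h; have := h z; rewrite count_map. Qed.

Lemma vfun_eq p q y : is_cyl_partition (map fst p) -> q \in p ->
  vfun p (wcat q.1 y) = wcat q.2 y.
Proof.
move=> hp hq; rewrite /vfun (find_unique _ (part_count _ hp) hq) ?pfx_wcat //.
by rewrite sh_wcat.
Qed.

Lemma vfun_data p : is_cyl_partition (map fst p) -> is_cyl_partition (map snd p) ->
  V_data (vfun p) p.
Proof. by move=> h1 h2; split => // q hq y; apply: vfun_eq. Qed.

Definition swapw (q : word * word) := (q.2, q.1).

Lemma vfun_inv p : is_cyl_partition (map fst p) -> is_cyl_partition (map snd p) ->
  forall z, vfun (map swapw p) (vfun p z) = z.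
Proof.
move=> h1 h2 z.
have : has (fun q : word * word => prefixb q.1 z) p by rewrite has_count part_count.
move=> /hasP [q hq pq]; rewrite (pfx_decomp pq) vfun_eq //.
have -> : wcat q.2 (sh (size q.1) z) = wcat (swapw q).1 (sh (size q.1) z) by [].
rewrite vfun_eq //; last by apply: map_f.
by rewrite -map_comp.
Qed.

Lemma prefixb_cons b m z : prefixb (b :: m) z = (z 0%N == b) && prefixb m (sh 1 z).
Proof.
apply/prefixbP/andP => [h|[/eqP h0 /prefixbP h]].
  split; first by apply/eqP; apply: h.
  by apply/prefixbP => i hi; rewrite /sh addn1 h.
case => [|i] hi //=; rewrite -h //; by rewrite /sh addn1.
Qed.

Lemma prefixb_rcons m b z : prefixb (rcons m b) z = prefixb m z && (z (size m) == b).
Proof.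
apply/prefixbP/andP => [h|[/prefixbP h /eqP hb]].
  split.
    apply/prefixbP => i hi; rewrite h ?size_rcons ?nth_rcons ?hi //; lia.
  by apply/eqP; rewrite h ?size_rcons // nth_rcons ltnn eqxx.
rewrite size_rcons => i hi; rewrite nth_rcons.
case: ltnP => hl; first exact: h.
have -> : i = size m by lia.
by rewrite eqxx.
Qed.

Fixpoint Pc (w : word) : seq word :=
  match w with
  | [::] => [::]
  | b :: w' => [:: [:: ~~ b]] ++ map (cons b) (Pc w')
  end.

Lemma size_Pc w : size (Pc w) = size w.
Proof. by elim: w => //= b w IH; rewrite size_map IH. Qed.

Lemma part_Pc w : is_cyl_partition (w :: Pc w).
Proof.
elim: w => [|b w IH] z /=; first by rewrite /prefixb.
rewrite count_map !prefixb_cons.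
have e0 : prefixb [::] (sh 1 z) by [].
rewrite e0 !andbT.
case: (boolP (z 0%N == b)) => hb /=.
  have -> : (z 0%N == ~~ b) = false by move/eqP: hb => ->; case: (b).
  apply: etrans (IH (sh 1 z)); rewrite /= add0n; congr addn.
  apply: eq_count => m /=.
  by rewrite prefixb_cons hb.
have -> : (z 0%N == ~~ b) = true by move: hb; case: (b); case: (z 0%N).
rewrite (@eq_count _ _ pred0) ?count_pred0 // => m.
by rewrite /= prefixb_cons (negbTE hb).
Qed.

Lemma part_split s1 m s2 : is_cyl_partition (s1 ++ m :: s2) ->
  is_cyl_partition (s1 ++ rcons m false :: rcons m true :: s2).
Proof.
move=> h z; have := h z; rewrite !count_cat /= !prefixb_rcons.
by case: (prefixb m z); case: (z (size m)).
Qed.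

Lemma wcat_nseq w k : wcat (w ++ nseq k false) zero = wcat w zero.
Proof.
rewrite wcat_cat; congr wcat; apply: functional_extensionality => i.
by rewrite /wcat /zero nth_nseq; case: (i < size _); case: (i < k).
Qed.

Lemma Q2_decomp x N : (forall n, (N <= n)%N -> x n = false) -> x = wcat (mkseq x N) zero.
Proof.
move=> h; apply: functional_extensionality => i; rewrite /wcat size_mkseq.
case: ltnP => hi; first by rewrite nth_mkseq.
by rewrite h.
Qed.

Lemma V_Q2 v x : inV v -> Q2 x -> Q2 (v x).
Proof.
move=> Hv [N hN]; have [a [b [pa _ hf]]] := logslope_lsl x Hv.
rewrite (pfx_f pa hf); exists (size b + N)%N => n hn.
rewrite /wcat; have -> : (n < size b)%N = false by lia.
rewrite /sh; apply: hN; lia.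
Qed.

Lemma map_fst_diag (l : seq word) : map fst (map (fun m => (m, m)) l) = l.
Proof. by elim: l => //= m l ->. Qed.
Lemma map_snd_diag (l : seq word) : map snd (map (fun m => (m, m)) l) = l.
Proof. by elim: l => //= m l ->. Qed.

Lemma t_exists x : Q2 x -> exists t tinv n0,
  [/\ inV t, t x = x, (forall z, tinv (t z) = z), lsl t x 1 &
      (forall i, (n0 <= i)%N -> x i = false) /\
      (forall z, agree n0.+1 z x -> forall i, (n0 <= i)%N -> t z i = z i.+1)].
Proof.
move=> [N hN]; set w := mkseq x N.
have hx : x = wcat w zero := Q2_decomp hN.
have sw : size w = N by rewrite size_mkseq.
set w0 := rcons w false; set w1 := rcons w true.
set p := [:: (rcons w0 false, w0); (rcons w0 true, rcons w1 false); (w1, rcons w1 true)]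
          ++ map (fun m => (m, m)) (Pc w).
have P0 : is_cyl_partition ([::] ++ w :: Pc w) by exact: part_Pc.
have P1 := part_split P0.
have h1 : is_cyl_partition (map fst p).
  rewrite map_cat map_fst_diag /=.
  exact: (part_split (s1 := [::]) (m := w0) (s2 := w1 :: Pc w) P1).
have h2 : is_cyl_partition (map snd p).
  rewrite map_cat map_snd_diag /=.
  exact: (part_split (s1 := [:: w0]) (m := w1) (s2 := Pc w) P1).
have ea : rcons w0 false = w ++ nseq 2 false by rewrite /w0 -!cats1 -catA.
have eb : w0 = w ++ nseq 1 false by rewrite /w0 -!cats1.
have hxa : x = wcat (rcons w0 false) zero by rewrite ea wcat_nseq.
have tq : forall y, vfun p (wcat (rcons w0 false) y) = wcat w0 y.
  by move=> y; rewrite (vfun_eq _ h1 (q := (rcons w0 false, w0))) // mem_head.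
exists (vfun p), (vfun (map swapw p)), N.+1; split.
- by exists p; apply: vfun_data.
- by rewrite {1}hxa tq eb wcat_nseq.
- exact: vfun_inv.
- exists (rcons w0 false), w0; split.
  + by rewrite {1}hxa pfx_wcat.
  + rewrite !size_rcons; lia.
  + exact: tq.
split; first by move=> i hi; apply: hN; lia.
move=> z hz i hi.
have pa : prefixb (rcons w0 false) z.
  apply: (pfx_agree (x := x)); first by rewrite {1}hxa pfx_wcat.
  by rewrite !size_rcons sw.
rewrite {1}(pfx_decomp pa) tq /wcat /sh !size_rcons sw.
have -> : (i < N.+1)%N = false by lia.
congr z; lia.
Qed.

Lemma trans_exists y : Q2 y -> exists u, inV u /\ u zero = y.
Proof.
move=> [N hN]; set w := mkseq y N.
have hy : y = wcat w zero := Q2_decomp hN.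
have sw : size w = N by rewrite size_mkseq.
set z0 := nseq N false.
set p := zip (z0 :: Pc z0) (w :: Pc w).
have hs : size (z0 :: Pc z0) = size (w :: Pc w) by rewrite /= !size_Pc sw size_nseq.
have h1 : is_cyl_partition (map fst p).
  by rewrite /p -/(unzip1 _) unzip1_zip ?hs //; apply: part_Pc.
have h2 : is_cyl_partition (map snd p).
  by rewrite /p -/(unzip2 _) unzip2_zip ?hs //; apply: part_Pc.
exists (vfun p); split; first by exists p; apply: vfun_data.
have -> : zero = wcat z0 zero by rewrite -[z0]cat0s wcat_nseq.
by rewrite (vfun_eq _ h1 (q := (z0, w))) ?mem_head.
Qed.


Lemma hfun_iter_conj (phi : homeo) t j z :
  hfun phi (iter j (conjh phi t) z) = iter j t (hfun phi z).
Proof. by elim: j => //= j IH; rewrite /conjh hKinv IH. Qed.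

Lemma iter_inj (t tinv : C -> C) j : (forall z, tinv (t z) = z) -> injective (iter j t).
Proof.
move=> h; elim: j => [|j IH] z1 z2 //= e.
by apply: IH; rewrite -(h (iter j t z1)) e h.
Qed.

Lemma dyn (phi : homeo) x t tinv n0 :
  t x = x -> (forall z, tinv (t z) = z) ->
  (forall i, (n0 <= i)%N -> x i = false) ->
  (forall z, agree n0.+1 z x -> forall i, (n0 <= i)%N -> t z i = z i.+1) ->
  lsl (conjh phi t) (hinv phi x) (-1)%R -> False.
Proof.
move=> tx tK x0 texp.
set x' := hinv phi x; set psi := conjh phi t.
have psix : psi x' = x' by rewrite /psi /conjh /x' hKinv tx.
move=> [a [b [pa eab hpsi]]].
have sb : size b = (size a).+1 by lia.
have ex' : x' = wcat b (sh (size a) x') by rewrite -{1}psix (pfx_f pa hpsi).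
have step : forall m z, (size a <= m)%N -> agree m z x' -> agree m.+1 (psi z) x'.
  move=> m z hm hz.
  have pz : prefixb a z by apply: (pfx_agree pa); apply: (agree_le hm).
  rewrite (pfx_f pz hpsi) => i hi; rewrite {1}ex' /wcat.
  case: ltnP => // hib; rewrite /sh; apply: hz; lia.
have iterp : forall j z, agree (size a) z x' -> agree (size a + j) (iter j psi z) x'.
  move=> j z hz; elim: j => [|j IH]; first by rewrite addn0.
  by rewrite addnS; apply: step => //; rewrite leq_addr.
set z' : C := fun i => if (i < size a)%N then x' i else ~~ x' i.
have hz' : agree (size a) z' x' by move=> i hi; rewrite /z' hi.
have nz' : z' <> x'.
  move=> e; have := congr1 (fun f => f (size a)) e; rewrite /z' ltnn /=.
  by case: (x' (size a)).
have [M hM] := hcont phi x' n0.+1.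
set w := hfun phi z'.
have hw : forall j, (M <= j)%N -> agree n0.+1 (iter j t w) x.
  move=> j hj i hi; rewrite /w -hfun_iter_conj.
  have -> : x = hfun phi x' by rewrite /x' hKinv.
  apply/esym; apply: hM => // k hk; apply/esym; apply: (iterp j z' hz'); lia.
set wJ := iter M t w.
have nwJ : wJ <> x.
  move=> e; apply: nz'.
  have : iter M t w = iter M t (hfun phi x').
    rewrite -/wJ e /x' hKinv; elim: (M) => //= n IH; by rewrite -IH tx.
  move/(@iter_inj t tinv M tK) => /(congr1 (hinv phi)); rewrite !hK => ->.
  by [].
have [i hi] : exists i, wJ i <> x i.
  apply: NNPP => h; apply: nwJ; apply: functional_extensionality => i.
  by apply: NNPP => h'; apply: h; exists i.
have ag : forall m, agree n0.+1 (iter m t wJ) x.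
  by move=> m; rewrite /wJ -iterD; apply: hw; rewrite leq_addl.
have hin : (n0 < i)%N.
  case: (ltnP n0 i) => // hle; exfalso; apply: hi; apply: (ag 0%N); lia.
have claim : forall m, (m <= i - n0)%N -> iter m t wJ (i - m) <> x (i - m).
  elim => [|m IH] hm; first by rewrite subn0.
  have hm' : (m <= i - n0)%N by lia.
  have := IH hm'; rewrite iterS texp //; last by lia.
  have -> : (i - m.+1).+1 = (i - m)%N by lia.
  by rewrite (x0 (i - m)%N) ?x0 //; lia.
apply: (claim (i - n0)%N (leqnn _)).
have -> : (i - (i - n0))%N = n0 by lia.
by apply: ag.
Qed.


Lemma int_unit (a b : int) : (a * b = 1)%R -> b = 1%R \/ b = (-1)%R.
Proof. move=> h.
have : (b <= -2 \/ b = -1 \/ b = 0 \/ b = 1 \/ 2 <= b)%R by lia.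
have : (a <= -1 \/ a = 0 \/ 1 <= a)%R by lia.
case=> [ha|[ha|ha]]; case=> [hb|[->|[hb|[->|hb]]]]; try (by left); try (by right); exfalso; try (subst; lia); nia.
Qed.

Definition Tk (t tinv : C -> C) (k : int) : C -> C :=
  match k with Posz n => iter n t | Negz n => iter n.+1 tinv end.

Lemma iter_fix (g : C -> C) x n : g x = x -> iter n g x = x.
Proof. by move=> h; elim: n => //= n ->. Qed.

Lemma Tk_props x t tinv : t x = x -> (forall z, tinv (t z) = z) -> lsl t x 1 ->
  forall k, Tk t tinv k x = x /\ lsl (Tk t tinv k) x k.
Proof.
move=> tx tK ht.
have tix : tinv x = x by rewrite -{1}tx tK.
have hti : lsl tinv x (-1) by have := lsl_inv tK ht; rewrite tx.
case=> n; rewrite /Tk; split; try exact: iter_fix.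
  by have := lsl_iter n tx ht; rewrite mulr1.
by have := lsl_iter n.+1 tix hti; rewrite mulrN1 NegzE.
Qed.

Lemma conj_Tk (phi : homeo) t tinv s x' : lsl (conjh phi t) x' s -> conjh phi t x' = x' ->
  (forall z, tinv (t z) = z) ->
  forall k, lsl (conjh phi (Tk t tinv k)) x' (k * s)%R.
Proof.
move=> hs hx tK.
have cK : forall z, conjh phi tinv (conjh phi t z) = z.
  by move=> z; rewrite /conjh hKinv tK hK.
have hsi : lsl (conjh phi tinv) x' (- s) by have := lsl_inv cK hs; rewrite hx.
have hix : conjh phi tinv x' = x' by rewrite -{1}hx cK.
case=> n /=.
  have -> : conjh phi (iter n t) = iter n (conjh phi t).
    by apply: functional_extensionality => z; rewrite conjh_iter.
  exact: lsl_iter.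
have -> : conjh phi (iter n.+1 tinv) = iter n.+1 (conjh phi tinv).
  by apply: functional_extensionality => z; rewrite conjh_iter.
by have := lsl_iter n.+1 hix hsi; rewrite NegzE mulrN mulNr.
Qed.

Lemma germ_transfer (phi : homeo) f h x A : prefixb A x ->
  (forall y, f (wcat A y) = h (wcat A y)) ->
  exists M, forall z, agree M z (hinv phi x) -> conjh phi f z = conjh phi h z.
Proof.
move=> pA hA; have [M hM] := hcont phi (hinv phi x) (size A).
exists M => z hz; rewrite /conjh.
have pz : prefixb A (hfun phi z).
  apply: (pfx_agree pA) => i hi; rewrite -[x in _ = x i](hKinv phi).
  by apply/esym/hM => // k hk; rewrite hz.
by rewrite (pfx_decomp pz) hA.
Qed.

Lemma key0 (phi : homeo) x t tinv s : t x = x -> (forall z, tinv (t z) = z) -> lsl t x 1 ->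
  lsl (conjh phi t) (hinv phi x) s ->
  forall f k, f x = x -> lsl f x k -> lsl (conjh phi f) (hinv phi x) (k * s)%R.
Proof.
move=> tx tK ht hs f k fx hf.
have [Tx hT] := Tk_props tx tK ht k.
have [A [pA hA]] := lsl_germ hf hT (etrans fx (esym Tx)).
have [M hM] := germ_transfer phi pA hA.
apply: (lsl_local (f := conjh phi (Tk t tinv k))).
  by exists M => z hz; rewrite hM.
apply: conj_Tk => //; by rewrite /conjh hKinv tx.
Qed.

Lemma s_is_one (phi : homeo) x t tinv n0 s : StabN phi -> Q2 x ->
  t x = x -> (forall z, tinv (t z) = z) -> lsl t x 1 ->
  (forall i, (n0 <= i)%N -> x i = false) ->
  (forall z, agree n0.+1 z x -> forall i, (n0 <= i)%N -> t z i = z i.+1) ->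
  lsl (conjh phi t) (hinv phi x) s -> s = 1%R.
Proof.
move=> hS hQ tx tK ht x0 texp hs.
have hQ' := stab_Q2inv hS hQ.
have [t' [t'inv [n0' [Vt' t'x t'K ht' _]]]] := t_exists hQ'.
set g := conjh (hrev phi) t'.
have Vg : inV g by apply: stab_conjV => //; apply: stab_rev.
have gx : g x = x by rewrite /g /conjh /= t'x hKinv.
have hg := logslope_lsl x Vg.
have h1 := key0 tx tK ht hs gx hg.
have e : conjh phi g = t'.
  by apply: functional_extensionality => z; rewrite /g /conjh /= !hK.
rewrite e in h1; have := lsl_uniq h1 ht' => /int_unit [] // hm.
exfalso; rewrite hm in hs; exact: (dyn tx tK x0 texp hs).
Qed.

Lemma key (phi : homeo) x f k : StabN phi -> Q2 x -> f x = x -> lsl f x k ->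
  lsl (conjh phi f) (hinv phi x) k.
Proof.
move=> hS hQ fx hf.
have [t [tinv [n0 [Vt tx tK ht [x0 texp]]]]] := t_exists hQ.
have hs := logslope_lsl (hinv phi x) (stab_conjV hS Vt).
have e := s_is_one hS hQ tx tK ht x0 texp hs.
by have := key0 tx tK ht hs fx hf; rewrite e mulr1.
Qed.


Lemma D_claim (phi : homeo) x f g kf kg kf' kg' : StabN phi -> Q2 x ->
  lsl f x kf -> lsl g x kg -> f x = g x ->
  lsl (conjh phi f) (hinv phi x) kf' -> lsl (conjh phi g) (hinv phi x) kg' ->
  (kf' - kf = kg' - kg)%R.
Proof.
move=> hS hQ hf hg fg hf' hg'.
have [t [tinv [n0 [Vt tx tK ht _]]]] := t_exists hQ.
set d := (kf - kg)%R.
have [Tx hT] := Tk_props tx tK ht d.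
set T := Tk t tinv d in Tx hT.
have hh : lsl (fun z => g (T z)) x (d + kg)%R by apply: lsl_comp => //; rewrite Tx.
have e1 : (d + kg)%R = kf by rewrite /d; lia.
rewrite e1 in hh.
have [A [pA hA]] : exists A, prefixb A x /\ forall y, f (wcat A y) = (fun z => g (T z)) (wcat A y).
  by apply: (lsl_germ hf hh); rewrite Tx.
have [M hM] := germ_transfer phi (h := fun z => g (T z)) pA hA.
have hcT : lsl (conjh phi T) (hinv phi x) d by apply: key.
have cTx : conjh phi T (hinv phi x) = hinv phi x by rewrite /conjh hKinv Tx.
have hc : lsl (fun z => conjh phi g (conjh phi T z)) (hinv phi x) (d + kg')%R.
  by apply: lsl_comp => //; rewrite cTx.
have hc' : lsl (conjh phi f) (hinv phi x) (d + kg')%R.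
  apply: lsl_local hc; exists M => z hz; rewrite hM //.
  by rewrite /conjh hKinv.
have := lsl_uniq hf' hc'; rewrite /d; lia.
Qed.

Lemma Q2_zero : Q2 zero.
Proof. by exists 0%N. Qed.

Lemma gamma_eq (phi : homeo) u : StabN phi -> inV u ->
  gamma phi (u zero) = Delta phi u zero.
Proof.
move=> hS Hu; rewrite /gamma; case: excluded_middle_informative => H; last first.
  by exfalso; apply: H; exists u.
set u0 := proj1_sig _.
have [Hu0 e0] : inV u0 /\ u0 zero = u zero := proj2_sig (constructive_indefinite_description _ H).
rewrite /Delta.
apply: (D_claim hS Q2_zero (logslope_lsl _ Hu0) (logslope_lsl _ Hu) e0);
  apply: logslope_lsl; exact: stab_conjV.
Qed.

Lemma claim3 (phi : homeo) x v : StabN phi -> Q2 x -> inV v ->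
  (gamma phi (v x) - gamma phi x = Delta phi v x)%R.
Proof.
move=> hS hQ Hv.
have [u [Hu ux]] := trans_exists hQ.
have [u2 [Hu2 u2x]] := trans_exists (V_Q2 Hv hQ).
rewrite -{1}u2x -ux !gamma_eq //.
have hvu : lsl (fun z => v (u z)) zero (logslope u zero + logslope v x)%R.
  by apply: lsl_comp; [apply: logslope_lsl | rewrite ux; apply: logslope_lsl].
have cu := stab_conjV hS Hu; have cv := stab_conjV hS Hv.
have hcvu : lsl (conjh phi (fun z => v (u z))) (hinv phi zero)
   (logslope (conjh phi u) (hinv phi zero) + logslope (conjh phi v) (hinv phi x))%R.
  have -> : conjh phi (fun z => v (u z)) = (fun z => conjh phi v (conjh phi u z)).
    by apply: functional_extensionality => z; rewrite /conjh hKinv.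
  apply: lsl_comp; first exact: logslope_lsl.
  have -> : conjh phi u (hinv phi zero) = hinv phi x by rewrite /conjh hKinv ux.
  exact: logslope_lsl.
have e2 : u2 zero = v (u zero) by rewrite u2x ux.
have := D_claim hS Q2_zero (logslope_lsl _ Hu2) hvu e2
  (logslope_lsl _ (stab_conjV hS Hu2)) hcvu.
rewrite /Delta ux; lia.
Qed.

Local Open Scope ring_scope.

Theorem mainTheorem14 (phi varphi : homeo) :
  StabN phi -> StabN varphi ->
  forall (x : C), Q2 x -> forall v w : C -> C, inV v -> inV w ->
  [/\ (v x = w x -> Delta varphi v x = Delta varphi w x),
      (forall (y : C) (u : C -> C), Q2 y -> inV u -> u zero = y ->
         gamma varphi y = Delta varphi u zero),
      gamma varphi (v x) - gamma varphi x = Delta varphi v x &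
      (forall y : C, Q2 y ->
         gamma (hcomp phi varphi) y =
         gamma phi y + gamma varphi (hinv phi y) - gamma varphi (hinv phi zero))].
Proof.
move=> hP hV x hQ v w Hv Hw; split.
- move=> e; rewrite /Delta.
  have := D_claim hV hQ (logslope_lsl _ Hv) (logslope_lsl _ Hw) e
    (logslope_lsl _ (stab_conjV hV Hv)) (logslope_lsl _ (stab_conjV hV Hw)).
  by [].
- by move=> y u _ Hu <-; apply: gamma_eq.
- exact: claim3.
move=> y hy.
rewrite {1}/gamma; case: excluded_middle_informative => H; last first.
  by exfalso; apply: H; apply: trans_exists.
set u0 := proj1_sig _.
have [Hu0 e0] : inV u0 /\ u0 zero = y := proj2_sig (constructive_indefinite_description _ H).
set u1 := conjh phi u0.
have Hu1 : inV u1 := stab_conjV hP Hu0.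
have hz : Q2 (hinv phi zero) := stab_Q2inv hP Q2_zero.
have := claim3 hV hz Hu1.
have -> : u1 (hinv phi zero) = hinv phi y by rewrite /u1 /conjh hKinv e0.
have g0 : gamma phi y = Delta phi u0 zero by rewrite -e0 gamma_eq.
rewrite g0 => h3.
have -> : Delta (hcomp phi varphi) u0 zero =
   (Delta varphi u1 (hinv phi zero) + Delta phi u0 zero)%R.
  rewrite /Delta /=.
  have -> : conjh (hcomp phi varphi) u0 = conjh varphi (conjh phi u0) by [].
  rewrite /u1; lia.
rewrite -h3; lia.
Qed.
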